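(* Let $A$ be an $n\times n$ decomposable generalized tournament matrix, let $I$ be a nontrivial clan of $A$, and let $x\in I$. Then $A$ is inseparable if and only if $A[([n]\setminus I)\cup\{x\}]$ is inseparable.
   Context: A generalized tournament matrix of order $n$ is a real $n\times n$ matrix $M=(m_{ij})$ with nonnegative entries satisfying $M+M^{t}=J_n-I_n$. Write $[n]=\{1,\ldots,n\}$; $M[Z]$ is the principal submatrix indexed by $Z$ (itself a generalized tournament matrix on index set $Z$). A clan of $M$ (with index set $V$) is a subset $X\subseteq V$ such that for all $i,j\in X$ and $k\in V\setminus X$, $m_{ik}=m_{jk}$ and $m_{ki}=m_{kj}$; the empty set, singletons and $V$ are trivial clans; $M$ is decomposable if it has a nontrivial clan. $M$ is separable if $V$ can be partitioned into two nonempty clans, and inseparable otherwise. *)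

(* Defs.v *)
From mathcomp Require Import all_boot all_order all_algebra.
Set Implicit Arguments. Unset Strict Implicit. Unset Printing Implicit Defensive.
Import Order.TTheory GRing.Theory Num.Theory.
Local Open Scope ring_scope.

(* A principal submatrix M[Z] is
   represented by the pair (M, Z): all notions below are relative to an
   index set V : {set 'I_n}, and "M[Z]" is M viewed on index set Z. *)

Definition gen_tournament (R : realFieldType) (n : nat) (M : 'M[R]_n) : Prop :=
  (forall i j, 0 <= M i j) /\ M + M^T = const_mx 1 - 1%:M.

Definition is_clan (R : realFieldType) (n : nat) (M : 'M[R]_n)
    (V X : {set 'I_n}) : Prop :=
  X \subset V /\
  forall i j k, i \in X -> j \in X -> k \in V :\: X ->
    M i k = M j k /\ M k i = M k j.

Definition trivial_subset (n : nat) (V X : {set 'I_n}) : Prop :=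
  X = set0 \/ (exists x, X = [set x]) \/ X = V.

Definition nontrivial_clan (R : realFieldType) (n : nat) (M : 'M[R]_n)
    (V X : {set 'I_n}) : Prop :=
  is_clan M V X /\ ~ trivial_subset V X.

Definition decomposable (R : realFieldType) (n : nat) (M : 'M[R]_n)
    (V : {set 'I_n}) : Prop :=
  exists X, nontrivial_clan M V X.

Definition separable (R : realFieldType) (n : nat) (M : 'M[R]_n)
    (V : {set 'I_n}) : Prop :=
  exists X Y : {set 'I_n},
    [/\ X != set0, Y != set0, X :&: Y = set0 & X :|: Y = V] /\
    (is_clan M V X /\ is_clan M V Y).

Definition inseparable (R : realFieldType) (n : nat) (M : 'M[R]_n)
    (V : {set 'I_n}) : Prop := ~ separable M V.

(* Main.v *)
Require Import Defs.
From mathcomp Require Import all_boot all_order all_algebra.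
Local Open Scope ring_scope.

Section S.
Variables (R : realFieldType) (n : nat) (A : 'M[R]_n) (I : {set 'I_n}) (x : 'I_n).
Hypothesis clI : is_clan A [set: 'I_n] I.
Hypothesis xI : x \in I.

Let W := ~: I :|: [set x].

Lemma inW k : (k \in W) = (k \notin I) || (k == x).
Proof. by rewrite !inE. Qed.

Lemma sepW_aux (X Y : {set 'I_n}) : X :&: Y = set0 -> X :|: Y = W ->
  Y != set0 -> is_clan A W X -> is_clan A W Y -> x \in X ->
  separable A [set: 'I_n].
Proof.
move=> hI hU hY [_ cX] [_ cY] xX.
have hXY k : k \in X -> k \in Y -> False.
  by move=> a b; have := in_set0 k; rewrite -hI inE a b.
have hW k : (k \in X) || (k \in Y) = (k \notin I) || (k == x).
  by rewrite -inW -hU inE.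
have YnI k : k \in Y -> k \notin I.
  move=> kY; have := hW k; rewrite kY orbT.
  case: eqP => [ekx|]; first by case: (hXY x xX); rewrite -ekx.
  by rewrite orbF => _ <-.
exists (X :|: I), Y; split; first split.
- by apply/set0Pn; exists x; rewrite inE xX.
- by [].
- apply/setP => k; rewrite !inE; case kY: (k \in Y); last by rewrite andbF.
  rewrite andbT; case kX: (k \in X); first by case: (hXY k).
  by rewrite (negbTE (YnI k kY)).
- apply/setP => k; rewrite !inE; case kI: (k \in I); first by rewrite orbT.
  by have := hW k; rewrite kI /= -orbA => ->.
- split.
  + split; first exact: subsetT.
    move=> i j k; rewrite !inE => iXI jXI /andP [kn _].
    move: kn; rewrite negb_or => /andP [kX kI].
    have kW : k \in W :\: X by rewrite inE kX inW kI.
    have kVI : k \in [set: 'I_n] :\: I by rewrite !inE kI.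
    have H l : (l \in X) || (l \in I) -> A l k = A x k /\ A k l = A k x.
      case/orP => lX; first exact: cX.
      exact: (proj2 clI).
    by case: (H i iXI); case: (H j jXI) => -> -> -> ->.
  + split; first exact: subsetT.
    move=> i j k iY jY; rewrite !inE andbT => kY.
    have := hW k; rewrite (negbTE kY) orbF.
    case kX: (k \in X) => /=.
      by move=> _; apply: cY => //; rewrite inE kY inW -(hW k) kX.
    move=> h; have kI : k \in I.
      by move: h; case: (k \in I).
    have iV : i \in [set: 'I_n] :\: I by rewrite !inE YnI.
    have jV : j \in [set: 'I_n] :\: I by rewrite !inE YnI.
    have xW : x \in W :\: Y by rewrite inE inW eqxx orbT andbT; apply/negP => /(hXY x xX).
    have [e1 e2] := proj2 clI k x i kI xI iV.
    have [e3 e4] := proj2 clI k x j kI xI jV.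
    have [e5 e6] := cY i j x iY jY xW.
    by rewrite e1 e2 e3 e4 e5 e6.
Qed.

Lemma sepW_all : separable A W -> separable A [set: 'I_n].
Proof.
move=> [X [Y [[hX hY hI hU] [cX cY]]]].
have xW : x \in W by rewrite inW eqxx orbT.
move: xW; rewrite -hU inE => /orP [xX|xY].
  exact: (@sepW_aux X Y).
apply: (@sepW_aux Y X) => //; by rewrite (setIC, setUC).
Qed.

Lemma sepV_aux (X Y : {set 'I_n}) : I != [set: 'I_n] ->
  X != set0 -> X :&: Y = set0 -> X :|: Y = [set: 'I_n] ->
  is_clan A [set: 'I_n] Y -> X :&: W = set0 -> separable A W.
Proof.
move=> hIT hX hI hU [_ cY] hXW.
have hXY k : k \in X -> k \in Y -> False.
  by move=> a b; have := in_set0 k; rewrite -hI inE a b.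
have hXW' k : k \in X -> k \in W -> False.
  by move=> a b; have := in_set0 k; rewrite -hXW inE a b.
have hXoY k : (k \in X) || (k \in Y) by rewrite -in_setU hU inE.
have [i0 i0X] := set0Pn _ hX.
have i0I : i0 \in I.
  by case: (boolP (i0 \in I)) => // h; case: (hXW' i0 i0X); rewrite inW h.
have nIY k : k \notin I -> k \in Y.
  move=> kI; have := hXoY k; case kX: (k \in X) => //= _.
  by case: (hXW' k kX); rewrite inW kI.
exists [set x], (~: I); split; first split.
- by apply/set0Pn; exists x; rewrite inE.
- apply/set0Pn; case: (pickP (fun k => k \notin I)) => [k hk|h].
    by exists k; rewrite inE.
  by case/negP: hIT; apply/eqP/setP => k; rewrite inE; have := h k; case: (k \in I).
- by apply/setP => k; rewrite !inE; case: eqP => // ->; rewrite xI.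
- by rewrite /W setUC.
- split.
  + split; first by apply/subsetP => k; rewrite !inE => ->; rewrite orbT.
    by move=> i j k; rewrite !inE => /eqP -> /eqP ->.
  + split; first by apply/subsetP => k; rewrite !inE => ->.
    move=> i j k; rewrite !inE => iI jI /andP [kn kW].
    have kx : k = x by move: kW kn; case: (k \in I) => //= /eqP.
    subst k.
    have iV : i \in [set: 'I_n] :\: I by rewrite !inE iI.
    have jV : j \in [set: 'I_n] :\: I by rewrite !inE jI.
    have i0Y : i0 \in [set: 'I_n] :\: Y.
      by rewrite !inE andbT; apply/negP => /(hXY i0 i0X).
    have [e1 e2] := proj2 clI x i0 i xI i0I iV.
    have [e3 e4] := proj2 clI x i0 j xI i0I jV.
    have [e5 e6] := cY i j i0 (nIY i iI) (nIY j jI) i0Y.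
    by rewrite e1 e2 e3 e4 e5 e6.
Qed.

Lemma sepV_all : I != [set: 'I_n] -> separable A [set: 'I_n] -> separable A W.
Proof.
move=> hIT [X [Y [[hX hY hI hU] [cX cY]]]].
case: (eqVneq (X :&: W) set0) => hXW.
  exact: (@sepV_aux X Y).
case: (eqVneq (Y :&: W) set0) => hYW.
  apply: (@sepV_aux Y X) => //; by rewrite (setIC, setUC).
exists (X :&: W), (Y :&: W); split; first split => //.
- by rewrite setIACA hI set0I.
- by rewrite -setIUl hU setTI.
- move: cX cY => [_ cX] [_ cY]; split.
  + split; first exact: subsetIr.
    move=> i j k; rewrite !inE => /andP [iX _] /andP [jX _] /andP [kn kW].
    by apply: cX => //; rewrite !inE; move: kn; rewrite kW andbT => ->.
  + split; first exact: subsetIr.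
    move=> i j k; rewrite !inE => /andP [iX _] /andP [jX _] /andP [kn kW].
    by apply: cY => //; rewrite !inE; move: kn; rewrite kW andbT => ->.
Qed.
End S.

Theorem lemma5p4 (R : realFieldType) (n : nat) (A : 'M[R]_n)
    (I : {set 'I_n}) (x : 'I_n) :
  gen_tournament A ->
  decomposable A [set: 'I_n] ->
  nontrivial_clan A [set: 'I_n] I ->
  x \in I ->
  (inseparable A [set: 'I_n] <-> inseparable A (~: I :|: [set x])).
Proof.
move=> _ _ [clI ntI] xI.
have hIT : I != [set: 'I_n].
  by apply/eqP => h; apply: ntI; right; right.
split=> H1 H2; apply: H1.
  exact: (@sepW_all _ _ _ _ _ clI xI H2).
exact: (@sepV_all _ _ _ _ _ clI xI hIT H2).
Qed.
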